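(* Let $c_1>0$, $c_3>0$, $r_2>0$, $r_4>0$, $\tau>0$, and put \[ a_1=2\pi c_3\frac{2c_1}{c_1+c_3},\qquad a_2=2\pi c_3\frac{c_1-c_3}{c_1+c_3}. \] Define \[ A=\begin{pmatrix}-a_1r_2&0\\0&-(a_1-a_2)r_4\end{pmatrix},\quad B=\begin{pmatrix}0&-a_1r_4\\-a_1r_2&0\end{pmatrix},\quad C=\begin{pmatrix}0&0\\0&-a_2r_4\end{pmatrix}, \] and $\Delta(s)=sI-A-Be^{-\tau s}-Ce^{-2\tau s}$ for $s\in\mathbb{C}$, with $I$ the $2\times2$ identity. Let $\sigma=\{\lambda\in\mathbb{C}:\det\Delta(\lambda)=0\}$. Then (a) $0\in\sigma$ and $\lambda=0$ is a simple root of $\det\Delta(\lambda)=0$; (b) every $\lambda\in\sigma\setminus\{0\}$ satisfies $\Re(\lambda)<0$.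
   Context: In the physical model $c_i=\cos\theta_i/n_i$ with refractive indices $n_i>0$ and angles $\theta_i\in[0,\pi/2)$ related by Snell's law $n_1\sin\theta_1=n_3\sin\theta_3$; $\Delta(s)$ is the characteristic matrix of the delay differential system $\dot x(t)=Ax(t)+Bx(t-\tau)+Cx(t-2\tau)+h(t)$ in $\mathbb{R}^2$. Note $a_1-a_2=2\pi c_3$. *)

(* Defs.v *)
From Stdlib Require Import Reals.
From Coquelicot Require Import Coquelicot.
Open Scope R_scope.

Definition Cexp (z : C) : C :=
  (exp (Re z) * cos (Im z), exp (Re z) * sin (Im z)).

(* real 2x2 matrices, entries indexed by 0,1 *)
Definition mat2 := nat -> nat -> R.

Definition a1 (c1 c3 : R) : R := 2 * PI * c3 * (2 * c1 / (c1 + c3)).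
Definition a2 (c1 c3 : R) : R := 2 * PI * c3 * ((c1 - c3) / (c1 + c3)).

Definition matA (c1 c3 r2 r4 : R) : mat2 := fun i j =>
  match i, j with
  | 0, 0 => - a1 c1 c3 * r2
  | 1, 1 => - (a1 c1 c3 - a2 c1 c3) * r4
  | _, _ => 0 end.
Definition matB (c1 c3 r2 r4 : R) : mat2 := fun i j =>
  match i, j with
  | 0, 1 => - a1 c1 c3 * r4
  | 1, 0 => - a1 c1 c3 * r2
  | _, _ => 0 end.
Definition matC (c1 c3 r2 r4 : R) : mat2 := fun i j =>
  match i, j with
  | 1, 1 => - a2 c1 c3 * r4
  | _, _ => 0 end.

Definition Delta (c1 c3 r2 r4 tau : R) (s : C) (i j : nat) : C :=
  ((if Nat.eqb i j then s else 0%C)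
   - RtoC (matA c1 c3 r2 r4 i j)
   - RtoC (matB c1 c3 r2 r4 i j) * Cexp (- (RtoC tau * s))
   - RtoC (matC c1 c3 r2 r4 i j) * Cexp (- (RtoC (2 * tau) * s)))%C.

Definition det2 (M : nat -> nat -> C) : C :=
  (M 0%nat 0%nat * M 1%nat 1%nat - M 0%nat 1%nat * M 1%nat 0%nat)%C.

Definition charfun (c1 c3 r2 r4 tau : R) (s : C) : C :=
  det2 (Delta c1 c3 r2 r4 tau s).

Definition simple_root (f : C -> C) (z : C) : Prop :=
  f z = 0%C /\ exists d : C, @is_derive C_AbsRing C_NormedModule f z d /\ d <> 0%C.

(* Main.v *)
Require Import Defs.
From Stdlib Require Import Reals Lra Psatz.
From Coquelicot Require Import Coquelicot.
Open Scope R_scope.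

Lemma abs_le a c : Rabs a <= c -> -c <= a <= c.
Proof. unfold Rabs; destruct (Rcase_abs a); lra. Qed.

Lemma exp_bound a : Rabs a <= 1/2 -> 0 <= exp a - 1 - a <= 2 * a^2.
Proof.
  intros Ha. pose proof (exp_ineq1_le a). pose proof (exp_ineq1_le (-a)).
  apply abs_le in Ha.
  split; [lra|].
  assert (exp a * exp (-a) = 1) by (rewrite <- exp_plus; replace (a + -a) with 0 by ring; apply exp_0).
  pose proof (exp_pos a).
  assert (exp a * (1 - a) <= 1) by nra.
  nra.
Qed.

Lemma sin_bounds_pos b : 0 <= b <= 1 -> b - b^3/6 <= sin b <= b.
Proof.
  intros Hb. pose proof PI2_1.
  destruct (sin_bound b 0) as [L U]; try lra.
  replace (sin_approx b (2 * 0 + 1)) with (b - b^3/6) in L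
    by (unfold sin_approx; simpl; unfold sin_term; simpl; field).
  replace (sin_approx b (2 * (0 + 1))) with (b - b^3/6 + b^5/120) in U
    by (unfold sin_approx; simpl; unfold sin_term; simpl; field).
  split; [lra|]. assert (HH: b^5 = b^3*(b*b)) by ring. assert (b^5 <= b^3 * 1) by (rewrite HH; apply Rmult_le_compat_l; [apply pow_le; lra | assert (0 <= (1-b)*(1+b)) by (apply Rmult_le_pos; lra); nra]). clear HH. nra.
Qed.

Lemma sin_bounds b : Rabs b <= 1 -> Rabs (sin b) <= Rabs b /\ Rabs (sin b - b) <= Rabs b ^ 2.
Proof.
  intros Hb. apply abs_le in Hb.
  destruct (Rle_or_lt 0 b).
  - destruct (sin_bounds_pos b) as [L U]; [lra|].
    assert (HH: b^3 = b*(b*b)) by ring. assert (b^3 <= b * 1) by (rewrite HH; apply Rmult_le_compat_l; [lra | nra]). clear HH.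
    rewrite (Rabs_right b) by lra. rewrite (Rabs_right (sin b)) by nra. split; [lra|].
    rewrite Rabs_left1 by lra. assert (HH: b^3 = b^2*b) by ring. assert (b^3 <= b^2 * 1) by (rewrite HH; apply Rmult_le_compat_l; [apply pow_le; lra | assert (0 <= (1-b)*(1+b)) by (apply Rmult_le_pos; lra); nra]). clear HH. nra.
  - destruct (sin_bounds_pos (-b)) as [L U]; [lra|]. rewrite sin_neg in L, U.
    rewrite (Rabs_left b) by lra. rewrite Rabs_left1 by nra. split; [lra|].
    rewrite Rabs_right by nra. assert ((-b)^3 <= (-b)^2 * 1) by (assert ((-b)^3 = (-b)^2*(-b)) by ring; nra). nra.
Qed.

Lemma cos_bounds b : Rabs b <= 1 -> Rabs (cos b - 1) <= b^2 / 2.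
Proof.
  intros Hb. apply abs_le in Hb. pose proof PI2_1.
  destruct (cos_bound b 0) as [L U]; try lra.
  replace (cos_approx b (2 * 0 + 1)) with (1 - b^2/2) in L
    by (unfold cos_approx; simpl; unfold cos_term; simpl; field).
  replace (cos_approx b (2 * (0 + 1))) with (1 - b^2/2 + b^4/24) in U
    by (unfold cos_approx; simpl; unfold cos_term; simpl; field).
  apply Rabs_le. split; [lra|]. assert (HH: b^4 = b^2*(b*b)) by ring. assert (b^4 <= b^2 * 1) by (rewrite HH; apply Rmult_le_compat_l; [nra | assert (0 <= (1-b)*(1+b)) by (apply Rmult_le_pos; lra); nra]). clear HH. nra.
Qed.

Lemma sqrt2_lt : sqrt 2 < 3/2.
Proof.
  pose proof (sqrt_sqrt 2 ltac:(lra)). pose proof (sqrt_pos 2). nra.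
Qed.

Lemma Cexp_deriv0 : @is_derive C_AbsRing (AbsRing_NormedModule C_AbsRing) Cexp (RtoC 0) (RtoC 1).
Proof.
  unfold is_derive, filterdiff. split; [apply is_linear_scal_l|].
  intros z Hz. assert (Hz0 : RtoC 0 = z) by exact (@is_filter_lim_locally_unique C_AbsRing (AbsRing_NormedModule C_AbsRing) _ _ Hz). subst z.
  intros eps.
  assert (Hd : 0 < Rmin (1/2) (eps/5)) by (apply Rmin_pos; [lra | destruct eps; simpl; lra]).
  exists (mkposreal _ Hd). intros [a b] Hw. unfold ball in Hw; simpl in Hw.
  unfold AbsRing_ball in Hw. cbn in Hw. unfold norm, minus, plus, opp, scal; cbn. 
  replace ((a, b) + - 0)%C with ((a, b)) in * by (unfold Cplus, Copp, RtoC; simpl; f_equal; ring).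
  replace (Cexp (a, b) + - Cexp 0 + - ((a, b) * 1))%C with (exp a * cos b - 1 - a, exp a * sin b - b)
    by (unfold Cexp, Cplus, Copp, Cmult, RtoC; simpl; rewrite exp_0, cos_0, sin_0; f_equal; ring).
  set (r := Cmod (a, b)) in *.
  pose proof (Rmax_Cmod (a, b)) as Hm. simpl in Hm. fold r in Hm.
  assert (Ha : Rabs a <= r) by (eapply Rle_trans; [apply Rmax_l | exact Hm]).
  assert (Hb : Rabs b <= r) by (eapply Rle_trans; [apply Rmax_r | exact Hm]).
  assert (Hr1 : r <= 1/2) by (pose proof (Rmin_l (1/2) (eps/5)); lra).
  assert (Hr2 : r <= eps/5) by (pose proof (Rmin_r (1/2) (eps/5)); lra).
  assert (Hr0 : 0 <= r) by (unfold r; apply Cmod_ge_0).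
  destruct (exp_bound a) as [E1 E2]; [lra|].
  pose proof (cos_bounds b ltac:(lra)) as Cb.
  destruct (sin_bounds b ltac:(lra)) as [S1 S2].
  pose proof (COS_bound b) as CB.
  pose proof (abs_le _ _ Ha) as Ha'. pose proof (abs_le _ _ Hb) as Hb'.
  pose proof (abs_le _ _ Cb) as Cb'. pose proof (abs_le _ _ S1) as S1'. pose proof (abs_le _ _ S2) as S2'.
  assert (Hb2 : Rabs b ^ 2 = b^2) by (unfold Rabs; destruct (Rcase_abs b); ring).
  assert (Ha2 : a^2 <= r^2) by nra.
  assert (Hb2' : b^2 <= r^2) by nra.
  assert (Hre : Rabs (exp a * cos b - 1 - a) <= 3 * r^2).
  { replace (exp a * cos b - 1 - a) with ((exp a - 1 - a) * cos b + (1 + a) * (cos b - 1)) by ring.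
    eapply Rle_trans; [apply Rabs_triang|]. rewrite !Rabs_mult.
    assert (Rabs (exp a - 1 - a) <= 2 * r^2) by (rewrite Rabs_right by lra; lra).
    assert (Rabs (cos b) <= 1) by (apply Rabs_le; lra).
    assert (Rabs (1 + a) <= 3/2) by (apply Rabs_le; lra).
    pose proof (Rabs_pos (exp a - 1 - a)). pose proof (Rabs_pos (cos b)).
    pose proof (Rabs_pos (1 + a)). pose proof (Rabs_pos (cos b - 1)).
    nra. }
  assert (Him : Rabs (exp a * sin b - b) <= 3 * r^2).
  { replace (exp a * sin b - b) with ((exp a - 1) * sin b + (sin b - b)) by ring.
    eapply Rle_trans; [apply Rabs_triang|]. rewrite !Rabs_mult.
    assert (Rabs (exp a - 1) <= 2 * r) by (apply Rabs_le; split; nra).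
    pose proof (Rabs_pos (exp a - 1)). pose proof (Rabs_pos (sin b)).
    rewrite Hb2 in S2. nra. }
  pose proof (Cmod_2Rmax (exp a * cos b - 1 - a, exp a * sin b - b)) as HC. simpl in HC.
  assert (Rmax (Rabs (exp a * cos b - 1 - a)) (Rabs (exp a * sin b - b)) <= 3 * r^2)
    by (apply Rmax_lub; assumption).
  pose proof sqrt2_lt. pose proof (sqrt_pos 2). destruct eps as [e He]; simpl in *.
  nra.
Qed.
Lemma Cexp2 (tau : R) (s : C) :
  Cexp (- (RtoC (2 * tau) * s)) = (Cexp (- (RtoC tau * s)) * Cexp (- (RtoC tau * s)))%C.
Proof.
  destruct s as [x y]. unfold Cexp, Cmult, RtoC, Copp; simpl.
  set (A := - (tau * x - 0 * y)). set (B := - (tau * y + 0 * x)).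
  replace (- (2 * tau * x - 0 * y)) with (A + A) by (unfold A; ring).
  replace (- (2 * tau * y + 0 * x)) with (2 * B) by (unfold B; ring).
  rewrite exp_plus, cos_2a, sin_2a. f_equal; ring.
Qed.

Lemma charfun_eq c1 c3 r2 r4 tau x y g h :
  Cexp (- (RtoC tau * (x, y))) = (g, h) ->
  let p := a1 c1 c3 * r2 in let q := r4 in let k := a1 c1 c3 - a2 c1 c3 in
  let K := q * k in let u1 := g*g - h*h in let u2 := 2*g*h in
  let V1 := p * k - a2 c1 c3 * x in let V2 := - a2 c1 c3 * y in
  charfun c1 c3 r2 r4 tau (x, y) =
   ((x+p)*(x+K) - y*y - q*(u1*V1 - u2*V2), (x+p)*y + y*(x+K) - q*(u1*V2+u2*V1)).
Proof.
  intros HE. intros.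
  unfold charfun, det2, Defs.Delta; simpl Nat.eqb; cbv iota. rewrite (Cexp2 tau (x,y)), HE. simpl.
  unfold u1, u2, V1, V2, K, k, q, p.
  unfold Cminus, Cmult, Cplus, Copp, RtoC; simpl. f_equal; ring.
Qed.

Lemma a_facts c1 c3 : 0 < c1 -> 0 < c3 ->
  0 < a1 c1 c3 /\ 0 < a1 c1 c3 - a2 c1 c3 /\ 0 < a1 c1 c3 - 2 * a2 c1 c3.
Proof.
  intros H1 H3. pose proof PI_RGT_0.
  assert (Hs : 0 < c1 + c3) by lra.
  unfold a1, a2. repeat split.
  - apply Rmult_lt_0_compat; [nra | apply Rdiv_lt_0_compat; lra].
  - replace (2 * PI * c3 * (2 * c1 / (c1 + c3)) - 2 * PI * c3 * ((c1 - c3) / (c1 + c3)))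
      with (2 * PI * c3) by (field; lra). nra.
  - replace (2 * PI * c3 * (2 * c1 / (c1 + c3)) - 2 * (2 * PI * c3 * ((c1 - c3) / (c1 + c3))))
      with (4 * PI * c3 * c3 / (c1 + c3)) by (field; lra).
    unfold Rdiv. apply Rmult_lt_0_compat. { assert (0 < PI * c3) by (apply Rmult_lt_0_compat; lra). nra. } apply Rinv_0_lt_compat; lra.
Qed.

Lemma core (p q k a2 x y u1 u2 : R) :
  0 < p -> 0 < q -> 0 < k + a2 -> 0 < k - a2 -> 0 <= x -> (x, y) <> (0, 0) ->
  u1 * u1 + u2 * u2 <= 1 ->
  let K := q * k in let V1 := p * k - a2 * x in let V2 := - a2 * y in
  (x+p)*(x+K) - y*y - q*(u1*V1 - u2*V2) = 0 ->
  (x+p)*y + y*(x+K) - q*(u1*V2+u2*V1) = 0 -> False.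
Proof.
  intros Hp Hq Hk1 Hk2 Hx Hne Hu K V1 V2 E1 E2.
  assert (Hk : 0 < k) by lra.
  set (A := (x+p)^2 + y^2). set (B := (x+K)^2 + y^2). set (Cc := V1^2 + V2^2).
  assert (HAB : A * B = q^2 * (u1*u1+u2*u2) * Cc).
  { unfold A, B, Cc.
    replace ((x + p) ^ 2 + y ^ 2) with ((x+p)^2 + y^2) by ring.
    transitivity (((x+p)*(x+K) - y*y)^2 + ((x+p)*y + y*(x+K))^2).
    - ring.
    - replace ((x+p)*(x+K) - y*y) with (q*(u1*V1 - u2*V2)) by lra.
      replace ((x+p)*y + y*(x+K)) with (q*(u1*V2+u2*V1)) by lra. ring. }
  assert (HA : 0 < A) by (unfold A; nra).
  assert (HC : Cc <= k^2 * A).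
  { unfold Cc, A, V1, V2.
    assert (0 <= x * (k + a2) * (x * (k - a2) + 2 * p * k)).
    { apply Rmult_le_pos. apply Rmult_le_pos; lra. nra. }
    assert (0 <= y^2 * ((k+a2)*(k-a2))). { apply Rmult_le_pos. nra. nra. }
    nra. }
  assert (HB : K^2 < B).
  { unfold B. assert (HK : 0 < K) by (unfold K; nra).
    destruct (Req_dec y 0) as [->|Hy].
    - assert (x <> 0) by (intro; subst; apply Hne; reflexivity). nra.
    - assert (0 < y^2) by (apply pow2_gt_0; auto). nra. }
  assert (HC0 : 0 <= Cc) by (unfold Cc; nra).
  assert (A * K^2 < A * B) by (apply Rmult_lt_compat_l; auto).
  assert (q^2 * (u1*u1+u2*u2) * Cc <= q^2 * Cc).
  { assert (0 <= q^2 * Cc) by nra. nra. }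
  assert (q^2 * Cc <= A * K^2). { unfold K. assert (0 < q^2) by nra. nra. }
  lra.
Qed.

Lemma dE (c : R) : @is_derive C_AbsRing (AbsRing_NormedModule C_AbsRing) (fun s => Cexp (- (RtoC c * s))) (RtoC 0) (RtoC (- c)).
Proof.
  enough (H : exists d, @is_derive C_AbsRing (AbsRing_NormedModule C_AbsRing) (fun s => Cexp (- (RtoC c * s))) (RtoC 0) d /\ d = RtoC (-c))
    by (destruct H as [d [H <-]]; exact H).
  eexists; split.
  - apply (is_derive_comp (V := AbsRing_NormedModule C_AbsRing) Cexp (fun s : C => (- (RtoC c * s))%C)).
    + replace (- (RtoC c * RtoC 0))%C with (RtoC 0) by (unfold RtoC, Cmult, Copp; simpl; f_equal; ring).
      exact Cexp_deriv0.
    + apply (is_derive_opp (V := AbsRing_NormedModule C_AbsRing) (fun s : C => (RtoC c * s)%C)).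
      apply (is_derive_mult (fun _ : C => RtoC c) (fun s : C => s)).
      * apply is_derive_const.
      * apply is_derive_id.
      * intros; apply Cmult_comm.
  - unfold scal, opp, plus, mult, zero, one; simpl.
    unfold RtoC, Cmult, Copp, Cplus; simpl. cbn. unfold Cmult; simpl. f_equal; ring.
Qed.

Lemma dIf (e : bool) : @is_derive C_AbsRing (AbsRing_NormedModule C_AbsRing)
  (fun s : C => if e then s else RtoC 0) (RtoC 0) (if e then one else zero).
Proof. destruct e; [apply is_derive_id | apply is_derive_const]. Qed.

Lemma DeltaD c1 c3 r2 r4 tau (i j : nat) :
  @is_derive C_AbsRing (AbsRing_NormedModule C_AbsRing) (fun s => Defs.Delta c1 c3 r2 r4 tau s i j) (RtoC 0)
    (RtoC ((if Nat.eqb i j then 1 else 0) + matB c1 c3 r2 r4 i j * tau + matC c1 c3 r2 r4 i j * (2 * tau))).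
Proof.
  set (b := matB c1 c3 r2 r4 i j). set (cc := matC c1 c3 r2 r4 i j). set (aa := matA c1 c3 r2 r4 i j).
  set (e := Nat.eqb i j).
  enough (H : exists d, @is_derive C_AbsRing (AbsRing_NormedModule C_AbsRing)
     (fun s => ((if e then s else RtoC 0) - RtoC aa - RtoC b * Cexp (- (RtoC tau * s)) - RtoC cc * Cexp (- (RtoC (2 * tau) * s)))%C) (RtoC 0) d
     /\ d = RtoC ((if e then 1 else 0) + b * tau + cc * (2 * tau)))
    by (destruct H as [d [H <-]]; exact H).
  eexists; split.
  - apply (is_derive_minus (V := AbsRing_NormedModule C_AbsRing)
       (fun s : C => ((if e then s else RtoC 0) - RtoC aa - RtoC b * Cexp (- (RtoC tau * s)))%C)
       (fun s : C => (RtoC cc * Cexp (- (RtoC (2 * tau) * s)))%C)).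
    2: { apply (is_derive_mult (fun _ : C => RtoC cc) (fun s : C => Cexp (- (RtoC (2 * tau) * s)))).
         apply is_derive_const. apply dE. intros; apply Cmult_comm. }
    apply (is_derive_minus (V := AbsRing_NormedModule C_AbsRing)
       (fun s : C => ((if e then s else RtoC 0) - RtoC aa)%C)
       (fun s : C => (RtoC b * Cexp (- (RtoC tau * s)))%C)).
    2: { apply (is_derive_mult (fun _ : C => RtoC b) (fun s : C => Cexp (- (RtoC tau * s)))).
         apply is_derive_const. apply dE. intros; apply Cmult_comm. }
    apply (is_derive_minus (V := AbsRing_NormedModule C_AbsRing)
       (fun s : C => (if e then s else RtoC 0)%C) (fun _ : C => RtoC aa)).
    2: apply is_derive_const.
    apply dIf.
  - destruct e; cbn; unfold Cmult, Cplus, Copp, RtoC; simpl; f_equal; ring.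
Qed.

Lemma transfer f x d : @is_derive C_AbsRing (AbsRing_NormedModule C_AbsRing) f x d -> @is_derive C_AbsRing C_NormedModule f x d.
Proof. intros [_ H]. split; [apply is_linear_scal_l|]. intros z Hz eps. exact (H z Hz eps). Qed.

Lemma Cexp0 c : Cexp (- (RtoC c * RtoC 0)) = RtoC 1.
Proof.
  unfold Cexp, RtoC, Cmult, Copp; simpl.
  replace (- (c * 0 - 0 * 0)) with 0 by ring. replace (- (c * 0 + 0 * 0)) with 0 by ring.
  rewrite exp_0, cos_0, sin_0. f_equal; ring.
Qed.

Lemma charfun_deriv c1 c3 r2 r4 tau :
  @is_derive C_AbsRing C_NormedModule (charfun c1 c3 r2 r4 tau) (RtoC 0)
    (RtoC (a1 c1 c3 * (r2 + r4 + 2 * tau * r2 * r4 * (a1 c1 c3 - a2 c1 c3)))).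
Proof.
  apply transfer.
  set (D := fun i j s => Defs.Delta c1 c3 r2 r4 tau s i j).
  enough (H : exists d, @is_derive C_AbsRing (AbsRing_NormedModule C_AbsRing)
     (fun s => minus (mult (D 0%nat 0%nat s) (D 1%nat 1%nat s)) (mult (D 0%nat 1%nat s) (D 1%nat 0%nat s))) (RtoC 0) d
     /\ d = RtoC (a1 c1 c3 * (r2 + r4 + 2 * tau * r2 * r4 * (a1 c1 c3 - a2 c1 c3))))
    by (destruct H as [d [H <-]]; exact H).
  assert (Hc : forall n m : C_AbsRing, mult n m = mult m n) by (intros; apply Cmult_comm).
  pose proof (is_derive_mult (D 0%nat 0%nat) (D 1%nat 1%nat) (RtoC 0) _ _
     (DeltaD c1 c3 r2 r4 tau 0 0) (DeltaD c1 c3 r2 r4 tau 1 1) Hc) as H1.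
  pose proof (is_derive_mult (D 0%nat 1%nat) (D 1%nat 0%nat) (RtoC 0) _ _
     (DeltaD c1 c3 r2 r4 tau 0 1) (DeltaD c1 c3 r2 r4 tau 1 0) Hc) as H2.
  pose proof (is_derive_minus _ _ _ _ _ H1 H2) as H3.
  eexists; split; [exact H3|].
  clear H1 H2 H3 Hc.
  unfold D, Defs.Delta. rewrite !Cexp0. unfold matA, matB, matC.
  set (A1 := a1 c1 c3). set (A2 := a2 c1 c3). simpl Nat.eqb. cbv iota beta.
  cbn -[A1 A2]. unfold Cmult, Cplus, Copp, Cminus, RtoC; simpl. f_equal; ring.
Qed.

Lemma charfun0 c1 c3 r2 r4 tau : charfun c1 c3 r2 r4 tau 0%C = 0%C.
Proof.
  assert (HE : Cexp (- (RtoC tau * (0, 0))) = (1, 0)) by exact (Cexp0 tau).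
  pose proof (charfun_eq c1 c3 r2 r4 tau 0 0 1 0 HE) as Hc. cbv zeta in Hc.
  change (charfun c1 c3 r2 r4 tau (0, 0) = 0%C). rewrite Hc. apply injective_projections; simpl; ring.
Qed.

Theorem lemma4 (c1 c3 r2 r4 tau : R) :
  0 < c1 -> 0 < c3 -> 0 < r2 -> 0 < r4 -> 0 < tau ->
  (charfun c1 c3 r2 r4 tau 0%C = 0%C /\ simple_root (charfun c1 c3 r2 r4 tau) 0%C) /\
  (forall l : C, charfun c1 c3 r2 r4 tau l = 0%C -> l <> 0%C -> Re l < 0).
Proof.
  intros H1 H3 Hr2 Hr4 Ht.
  destruct (a_facts c1 c3 H1 H3) as [Ha1 [Hk Hk2]].
  split; [split; [apply charfun0 | split; [apply charfun0 |]] |].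
  - eexists; split; [apply charfun_deriv |].
    intro H. injection H as H. 
    assert (0 < a1 c1 c3 * (r2 + r4 + 2 * tau * r2 * r4 * (a1 c1 c3 - a2 c1 c3))).
    { apply Rmult_lt_0_compat; [lra|].
      assert (0 < 2 * tau * r2 * r4 * (a1 c1 c3 - a2 c1 c3))
        by (repeat apply Rmult_lt_0_compat; lra). lra. }
    lra.
  - intros [x y] Hl Hne. simpl. destruct (Rlt_or_le x 0) as [Hx|Hx]; [exact Hx|]. exfalso.
    destruct (Cexp (- (RtoC tau * (x, y)))) as [g h] eqn:HE.
    pose proof (charfun_eq c1 c3 r2 r4 tau x y g h HE) as Hc. cbv zeta in Hc.
    rewrite Hc in Hl. injection Hl as E1 E2.
    assert (Hgh : g * g + h * h <= 1).
    { unfold Cexp in HE. simpl in HE. injection HE as <- <-.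
      set (z := - (tau * x - 0 * y)). set (w := - (tau * y + 0 * x)).
      assert (Hz : z <= 0) by (unfold z; nra).
      assert (exp z <= 1) by (rewrite <- exp_0; destruct (Req_dec z 0) as [->|Hz0]; [lra | left; apply exp_increasing; lra]).
      pose proof (exp_pos z). pose proof (sin2_cos2 w). unfold Rsqr in *. nra. }
    apply (core (a1 c1 c3 * r2) r4 (a1 c1 c3 - a2 c1 c3) (a2 c1 c3) x y (g*g - h*h) (2*g*h)); try lra.
    + apply Rmult_lt_0_compat; lra.
    + intro Hxy. apply Hne. exact Hxy.
    + assert (0 <= g*g + h*h) by nra. nra.
Qed.
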